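(* The sequent $\cdot;\cdot\Rightarrow\bot$ (empty context, no hypotheses, conclusion $\bot$) is not derivable in the sequent calculus $NL^{\Rightarrow}$.
   Context: Types are $\tau ::= \delta \mid \nu \mid \langle\nu\rangle\tau$, with $\delta$ ranging over data types and $\nu$ over name types. Terms are $t ::= x \mid \mathsf{a} \mid c \mid f(t_1,\dots,t_n)$, where $x$ ranges over a countably infinite set of variables and $\mathsf a,\mathsf b,\dots$ over a disjoint countably infinite set of name-symbols. The signature assigns $c:\delta$, $f:\tau_1,\dots,\tau_n\to\delta$, $p:\tau_1,\dots,\tau_n\to o$, and contains for all name types $\nu$ and types $\tau$ the symbols $swap:\nu,\nu,\tau\to\tau$, $abs:\nu,\tau\to\langle\nu\rangle\tau$, $eq:\tau,\tau\to o$, $fresh:\nu,\tau\to o$, written $(a\;b)\cdot t$, $\langle a\rangle t$, $t\approx u$, $a\# t$. Formulas: $\top,\bot,p(\vec t),\phi\wedge\psi,\phi\vee\psi,\phi\supset\psi,\forall x{:}\tau.\phi,\exists x{:}\tau.\phi$, and $\mathsf{N}\mathsf a{:}\nu.\phi$ (the fresh-name quantifier, binding the name-symbol $\mathsf a$). Contexts are $\Sigma::=\cdot\mid\Sigma,x{:}\tau\mid\Sigma\#\mathsf a{:}\nu$ (no symbol twice); $\Sigma\#\mathsf a{:}\nu$ records that $\mathsf a$ has type $\nu$ and is fresh for everything in $\Sigma$. Typing is the standard many-sorted one ($\Sigma\vdash\mathsf N\mathsf a{:}\nu.\phi:o$ iff $\Sigma\#\mathsf a{:}\nu\vdash\phi:o$).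 $Tm_\Sigma$ is the set of terms well-typed in $\Sigma$; $|\cdot|=\emptyset$, $|\Sigma,x{:}\tau|=|\Sigma|$, $|\Sigma\#\mathsf a{:}\nu|=|\Sigma|\cup\{\mathsf a\#t\mid t\in Tm_\Sigma\}$. $NL^{\Rightarrow}$ derives sequents $\Sigma;\Gamma\Rightarrow\Delta$ ($\Gamma,\Delta$ finite multisets of formulas well-formed in $\Sigma$) by: (i) the classical G3c rules: initial sequents $\Sigma;\Gamma,P\Rightarrow P,\Delta$ for atomic $P$, $\Sigma;\Gamma\Rightarrow\top,\Delta$, $\Sigma;\Gamma,\bot\Rightarrow\Delta$, and the standard context-sharing left/right rules for $\wedge,\vee,\supset,\forall,\exists$ ($\forall R$, $\exists L$ add a fresh eigenvariable $x{:}\sigma$ to $\Sigma$; $\forall L$ from $\Sigma;\Gamma,\forall x{:}\sigma.\phi,\phi[t/x]\Rightarrow\Delta$ and $\exists R$ from $\Sigma;\Gamma\Rightarrow\exists x{:}\sigma.\phi,\phi[t/x],\Delta$ with $\Sigma\vdash t:\sigma$); (ii) $\mathsf N R$: from $\Sigma\#\mathsf a{:}\nu;\Gamma\Rightarrow\phi,\Delta$ infer $\Sigma;\Gamma\Rightarrow\mathsf N\mathsf a{:}\nu.\phi,\Delta$, and $\mathsf N L$: from $\Sigma\#\mathsf a{:}\nu;\Gamma,\phi\Rightarrow\Delta$ infer $\Sigma;\Gamma,\mathsf N\mathsf a{:}\nu.\phi\Rightarrow\Delta$ (both with $\mathsf a\notin\Sigma$); (iii) nonlogical rules: $\approx R$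 (from $\Sigma;\Gamma,t\approx t\Rightarrow\Delta$ infer $\Sigma;\Gamma\Rightarrow\Delta$); $\approx S$ (from $\Sigma;\Gamma,t\approx u,P(t),P(u)\Rightarrow\Delta$ infer $\Sigma;\Gamma,t\approx u,P(t)\Rightarrow\Delta$, $P$ atomic); for each instance $P_1\wedge\dots\wedge P_n\supset Q_1\vee\dots\vee Q_m$ ($m\ge 0$) of the schemes (S1) $(a\;a)\cdot x\approx x$, (S2) $(a\;b)\cdot(a\;b)\cdot x\approx x$, (S3) $(a\;b)\cdot a\approx b$, (E1) $(a\;b)\cdot c\approx c$, (E2) $(a\;b)\cdot f(\vec t)\approx f((a\;b)\cdot\vec t)$, (E3) $p(\vec t)\supset p((a\;b)\cdot\vec t)$, (F1) $a\#x\wedge b\#x\supset(a\;b)\cdot x\approx x$, (F2) $a\#b$ for $a,b$ of distinct name types, (F3) $a\#a\supset\bot$ ($m=0$), (F4) $a\#b\vee a\approx b$, (A1) $a\#y\wedge x\approx(a\;b)\cdot y\supset\langle a\rangle x\approx\langle b\rangle y$ (with $a,b$ arbitrary well-typed terms of name type, $x,y,\vec t$ arbitrary well-typed terms), the rule: from $\Sigma;\Gamma,\vec P,Q_i\Rightarrow\Delta$ for all $i\le m$ infer $\Sigma;\Gamma,\vec P\Rightarrow\Delta$; (A2) from $\Sigma;\Gamma,E,a\approx b,t\approx u\Rightarrow\Delta$ and $\Sigma;\Gamma,E,a\#u,t\approx(a\;b)\cdot u\Rightarrow\Delta$ infer $\Sigma;\Gamma,E\Rightarrow\Delta$, where $E$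 is $\langle a\rangle t\approx\langle b\rangle u$; (A3) from $\Sigma\vdash t:\langle\nu\rangle\sigma$ and $\Sigma,a{:}\nu,x{:}\sigma;\Gamma,t\approx\langle a\rangle x\Rightarrow\Delta$ ($a,x\notin\Sigma$) infer $\Sigma;\Gamma\Rightarrow\Delta$; (F) from $\Sigma\#\mathsf a{:}\nu;\Gamma\Rightarrow\Delta$ ($\mathsf a\notin\Sigma$) infer $\Sigma;\Gamma\Rightarrow\Delta$; ($\Sigma\#$) from $\Sigma;\Gamma,\mathsf a\#t\Rightarrow\Delta$ with $\mathsf a\#t\in|\Sigma|$ infer $\Sigma;\Gamma\Rightarrow\Delta$. *)

(* Defs.v *)
From Stdlib Require Import List Permutation.
Import ListNotations.

Set Implicit Arguments.

Inductive ty (D N : Type) : Type :=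
| TData (d : D)
| TName (n : N)
| TAbs (n : N) (t : ty D N).

(** A signature: data types, name types, constants c:delta, function
    symbols f : tau1..taun -> delta, relation symbols p : tau1..taun -> o.
    (swap, abs, eq, fresh are built into the syntax below, at all types.) *)
Record signature := {
  dty : Type;
  nty : Type;
  cst : Type;
  fsym : Type;
  psym : Type;
  cst_ty : cst -> dty;
  fsym_ty : fsym -> list (ty dty nty) * dty;
  psym_ty : psym -> list (ty dty nty)
}.

Section NominalLogic.
Variable sg : signature.

Definition sty := ty (dty sg) (nty sg).

(** Free variables [tvar x] and name-symbols [tname a] are named by
    naturals (two disjoint name spaces); [tbvar i] / [tbname i] are de Bruijn
    indices for variables bound by forall/exists resp. name-symbols bound by
    the N-quantifier. *)
Inductive term : Type :=
| tvar (x : nat)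
| tbvar (i : nat)
| tname (a : nat)
| tbname (i : nat)
| tcst (c : cst sg)
| tapp (f : fsym sg) (ts : list term)
| tswap (a b t : term)
| tabs (a t : term).

Inductive form : Type :=
| fTop
| fBot
| fPred (p : psym sg) (ts : list term)
| fEq (t u : term)
| fFresh (a t : term)
| fAnd (A B : form)
| fOr (A B : form)
| fImp (A B : form)
| fAll (s : sty) (A : form)
| fEx (s : sty) (A : form)
| fNew (n : nty sg) (A : form).

(** Opening / substitution (the substituted terms are always locally closed). *)
Fixpoint topen_var (k : nat) (s t : term) : term :=
  match t with
  | tbvar i => if Nat.eqb i k then s else t
  | tapp f ts => tapp f (map (topen_var k s) ts)
  | tswap a b u => tswap (topen_var k s a) (topen_var k s b) (topen_var k s u)
  | tabs a u => tabs (topen_var k s a) (topen_var k s u)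
  | _ => t
  end.

Fixpoint topen_name (k : nat) (c : nat) (t : term) : term :=
  match t with
  | tbname i => if Nat.eqb i k then tname c else t
  | tapp f ts => tapp f (map (topen_name k c) ts)
  | tswap a b u => tswap (topen_name k c a) (topen_name k c b) (topen_name k c u)
  | tabs a u => tabs (topen_name k c a) (topen_name k c u)
  | _ => t
  end.

Fixpoint tsubst (z : nat) (s t : term) : term :=
  match t with
  | tvar y => if Nat.eqb y z then s else t
  | tapp f ts => tapp f (map (tsubst z s) ts)
  | tswap a b u => tswap (tsubst z s a) (tsubst z s b) (tsubst z s u)
  | tabs a u => tabs (tsubst z s a) (tsubst z s u)
  | _ => t
  end.

Fixpoint fopen_var (k : nat) (s : term) (A : form) : form :=
  match A with
  | fTop => fTop
  | fBot => fBot
  | fPred p ts => fPred p (map (topen_var k s) ts)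
  | fEq t u => fEq (topen_var k s t) (topen_var k s u)
  | fFresh a t => fFresh (topen_var k s a) (topen_var k s t)
  | fAnd B C => fAnd (fopen_var k s B) (fopen_var k s C)
  | fOr B C => fOr (fopen_var k s B) (fopen_var k s C)
  | fImp B C => fImp (fopen_var k s B) (fopen_var k s C)
  | fAll σ B => fAll σ (fopen_var (Datatypes.S k) s B)
  | fEx σ B => fEx σ (fopen_var (Datatypes.S k) s B)
  | fNew ν B => fNew ν (fopen_var k s B)
  end.

Fixpoint fopen_name (k : nat) (c : nat) (A : form) : form :=
  match A with
  | fTop => fTop
  | fBot => fBot
  | fPred p ts => fPred p (map (topen_name k c) ts)
  | fEq t u => fEq (topen_name k c t) (topen_name k c u)
  | fFresh a t => fFresh (topen_name k c a) (topen_name k c t)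
  | fAnd B C => fAnd (fopen_name k c B) (fopen_name k c C)
  | fOr B C => fOr (fopen_name k c B) (fopen_name k c C)
  | fImp B C => fImp (fopen_name k c B) (fopen_name k c C)
  | fAll σ B => fAll σ (fopen_name k c B)
  | fEx σ B => fEx σ (fopen_name k c B)
  | fNew ν B => fNew ν (fopen_name (Datatypes.S k) c B)
  end.

Definition fsubst (z : nat) (s : term) (A : form) : form :=
  match A with
  | fPred p ts => fPred p (map (tsubst z s) ts)
  | fEq t u => fEq (tsubst z s t) (tsubst z s u)
  | fFresh a t => fFresh (tsubst z s a) (tsubst z s t)
  | _ => A
  end.

Definition is_atom (A : form) : Prop :=
  match A with
  | fPred _ _ | fEq _ _ | fFresh _ _ => True
  | _ => False
  end.

(** Contexts; the head of the list is the most recently added entry.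
    [CName a nu :: Sigma] is  Sigma # a:nu. *)
Inductive centry : Type :=
| CVar (x : nat) (τ : sty)
| CName (a : nat) (ν : nty sg).

Definition ctx := list centry.

Definition var_in (x : nat) (Σ : ctx) : Prop := exists τ, In (CVar x τ) Σ.
Definition name_in (a : nat) (Σ : ctx) : Prop := exists ν, In (CName a ν) Σ.

Inductive wfctx : ctx -> Prop :=
| wfctx_nil : wfctx []
| wfctx_var x τ Σ : wfctx Σ -> ~ var_in x Σ -> wfctx (CVar x τ :: Σ)
| wfctx_name a ν Σ : wfctx Σ -> ~ name_in a Σ -> wfctx (CName a ν :: Σ).

Inductive has_type (Σ : ctx) : term -> sty -> Prop :=
| ty_var x τ : In (CVar x τ) Σ -> has_type Σ (tvar x) τ
| ty_name a ν : In (CName a ν) Σ -> has_type Σ (tname a) (TName _ ν)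
| ty_cst c : has_type Σ (tcst c) (TData _ (cst_ty sg c))
| ty_app f ts : Forall2 (has_type Σ) ts (fst (fsym_ty sg f)) ->
    has_type Σ (tapp f ts) (TData _ (snd (fsym_ty sg f)))
| ty_swap a b t ν τ : has_type Σ a (TName _ ν) -> has_type Σ b (TName _ ν) ->
    has_type Σ t τ -> has_type Σ (tswap a b t) τ
| ty_abs a t ν τ : has_type Σ a (TName _ ν) -> has_type Σ t τ ->
    has_type Σ (tabs a t) (TAbs ν τ).

Inductive wff (Σ : ctx) : form -> Prop :=
| wf_top : wff Σ fTop
| wf_bot : wff Σ fBot
| wf_pred p ts : Forall2 (has_type Σ) ts (psym_ty sg p) -> wff Σ (fPred p ts)
| wf_eq t u τ : has_type Σ t τ -> has_type Σ u τ -> wff Σ (fEq t u)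
| wf_fresh a t ν τ : has_type Σ a (TName _ ν) -> has_type Σ t τ -> wff Σ (fFresh a t)
| wf_and A B : wff Σ A -> wff Σ B -> wff Σ (fAnd A B)
| wf_or A B : wff Σ A -> wff Σ B -> wff Σ (fOr A B)
| wf_imp A B : wff Σ A -> wff Σ B -> wff Σ (fImp A B)
| wf_all σ A : (forall x, ~ var_in x Σ -> wff (CVar x σ :: Σ) (fopen_var 0 (tvar x) A)) ->
    wff Σ (fAll σ A)
| wf_ex σ A : (forall x, ~ var_in x Σ -> wff (CVar x σ :: Σ) (fopen_var 0 (tvar x) A)) ->
    wff Σ (fEx σ A)
| wf_new ν A : (forall a, ~ name_in a Σ -> wff (CName a ν :: Σ) (fopen_name 0 a A)) ->
    wff Σ (fNew ν A).

Fixpoint ctx_fresh (Σ : ctx) (A : form) : Prop :=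
  match Σ with
  | [] => False
  | CVar _ _ :: Σ' => ctx_fresh Σ' A
  | CName a _ :: Σ' =>
      ctx_fresh Σ' A \/ exists t τ, has_type Σ' t τ /\ A = fFresh (tname a) t
  end.

(** Instances  P1 /\ ... /\ Pn  ⊃  Q1 \/ ... \/ Qm  of the nominal axiom
    schemes.  E2 / E3 are taken for all function / relation symbols of the
    signature, including swap, abs, ~ and #.  Well-typedness of the
    instances is enforced by the well-formedness of the sequents in which
    they occur (see [NL]). *)
Inductive ax_inst (Σ : ctx) : list form -> list form -> Prop :=
| axS1 a x : ax_inst Σ [] [fEq (tswap a a x) x]
| axS2 a b x : ax_inst Σ [] [fEq (tswap a b (tswap a b x)) x]
| axS3 a b : ax_inst Σ [] [fEq (tswap a b a) b]
| axE1 a b c : ax_inst Σ [] [fEq (tswap a b (tcst c)) (tcst c)]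
| axE2 a b f ts :
    ax_inst Σ [] [fEq (tswap a b (tapp f ts)) (tapp f (map (tswap a b) ts))]
| axE2swap a b c d x :
    ax_inst Σ [] [fEq (tswap a b (tswap c d x))
                      (tswap (tswap a b c) (tswap a b d) (tswap a b x))]
| axE2abs a b c x :
    ax_inst Σ [] [fEq (tswap a b (tabs c x)) (tabs (tswap a b c) (tswap a b x))]
| axE3 a b p ts : ax_inst Σ [fPred p ts] [fPred p (map (tswap a b) ts)]
| axE3eq a b t u : ax_inst Σ [fEq t u] [fEq (tswap a b t) (tswap a b u)]
| axE3fresh a b c t : ax_inst Σ [fFresh c t] [fFresh (tswap a b c) (tswap a b t)]
| axF1 a b x : ax_inst Σ [fFresh a x; fFresh b x] [fEq (tswap a b x) x]
| axF2 a b ν ν' : has_type Σ a (TName _ ν) -> has_type Σ b (TName _ ν') -> ν <> ν' ->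
    ax_inst Σ [] [fFresh a b]
| axF3 a : ax_inst Σ [fFresh a a] []
| axF4 a b : ax_inst Σ [] [fFresh a b; fEq a b]
| axA1 a b x y :
    ax_inst Σ [fFresh a y; fEq x (tswap a b y)] [fEq (tabs a x) (tabs b y)].

Definition wfseq (Σ : ctx) (Γ Δ : list form) : Prop :=
  wfctx Σ /\ Forall (wff Σ) Γ /\ Forall (wff Σ) Δ.

(** Derivability in NL^=>.  Multisets are lists up to [Permutation];
    every sequent occurring in a derivation is required to be well formed. *)
Inductive NL : ctx -> list form -> list form -> Prop :=
| r_init Σ Γ Δ P : wfseq Σ Γ Δ -> is_atom P -> In P Γ -> In P Δ -> NL Σ Γ Δ
| r_topR Σ Γ Δ : wfseq Σ Γ Δ -> In fTop Δ -> NL Σ Γ Δ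
| r_botL Σ Γ Δ : wfseq Σ Γ Δ -> In fBot Γ -> NL Σ Γ Δ
| r_andL Σ Γ Γ' Δ A B : wfseq Σ Γ Δ -> Permutation Γ (fAnd A B :: Γ') ->
    NL Σ (A :: B :: Γ') Δ -> NL Σ Γ Δ
| r_andR Σ Γ Δ Δ' A B : wfseq Σ Γ Δ -> Permutation Δ (fAnd A B :: Δ') ->
    NL Σ Γ (A :: Δ') -> NL Σ Γ (B :: Δ') -> NL Σ Γ Δ
| r_orL Σ Γ Γ' Δ A B : wfseq Σ Γ Δ -> Permutation Γ (fOr A B :: Γ') ->
    NL Σ (A :: Γ') Δ -> NL Σ (B :: Γ') Δ -> NL Σ Γ Δ
| r_orR Σ Γ Δ Δ' A B : wfseq Σ Γ Δ -> Permutation Δ (fOr A B :: Δ') ->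
    NL Σ Γ (A :: B :: Δ') -> NL Σ Γ Δ
| r_impL Σ Γ Γ' Δ A B : wfseq Σ Γ Δ -> Permutation Γ (fImp A B :: Γ') ->
    NL Σ Γ' (A :: Δ) -> NL Σ (B :: Γ') Δ -> NL Σ Γ Δ
| r_impR Σ Γ Δ Δ' A B : wfseq Σ Γ Δ -> Permutation Δ (fImp A B :: Δ') ->
    NL Σ (A :: Γ) (B :: Δ') -> NL Σ Γ Δ
| r_allL Σ Γ Δ σ A t : wfseq Σ Γ Δ -> In (fAll σ A) Γ -> has_type Σ t σ ->
    NL Σ (fopen_var 0 t A :: Γ) Δ -> NL Σ Γ Δ
| r_allR Σ Γ Δ Δ' σ A x : wfseq Σ Γ Δ -> Permutation Δ (fAll σ A :: Δ') ->
    ~ var_in x Σ -> NL (CVar x σ :: Σ) Γ (fopen_var 0 (tvar x) A :: Δ') -> NL Σ Γ Δ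
| r_exL Σ Γ Γ' Δ σ A x : wfseq Σ Γ Δ -> Permutation Γ (fEx σ A :: Γ') ->
    ~ var_in x Σ -> NL (CVar x σ :: Σ) (fopen_var 0 (tvar x) A :: Γ') Δ -> NL Σ Γ Δ
| r_exR Σ Γ Δ σ A t : wfseq Σ Γ Δ -> In (fEx σ A) Δ -> has_type Σ t σ ->
    NL Σ Γ (fopen_var 0 t A :: Δ) -> NL Σ Γ Δ
| r_newR Σ Γ Δ Δ' ν A a : wfseq Σ Γ Δ -> Permutation Δ (fNew ν A :: Δ') ->
    ~ name_in a Σ -> NL (CName a ν :: Σ) Γ (fopen_name 0 a A :: Δ') -> NL Σ Γ Δ
| r_newL Σ Γ Γ' Δ ν A a : wfseq Σ Γ Δ -> Permutation Γ (fNew ν A :: Γ') ->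
    ~ name_in a Σ -> NL (CName a ν :: Σ) (fopen_name 0 a A :: Γ') Δ -> NL Σ Γ Δ
| r_eqR Σ Γ Δ t : wfseq Σ Γ Δ -> NL Σ (fEq t t :: Γ) Δ -> NL Σ Γ Δ
| r_eqS Σ Γ Γ' Δ t u A z : wfseq Σ Γ Δ -> is_atom A ->
    Permutation Γ (fEq t u :: fsubst z t A :: Γ') ->
    NL Σ (fsubst z u A :: Γ) Δ -> NL Σ Γ Δ
| r_axiom Σ Γ Γ' Δ Ps Qs : wfseq Σ Γ Δ -> ax_inst Σ Ps Qs ->
    Permutation Γ (Ps ++ Γ') ->
    (forall Q, In Q Qs -> NL Σ (Q :: Γ) Δ) -> NL Σ Γ Δ
| r_A2 Σ Γ Δ a b t u : wfseq Σ Γ Δ -> In (fEq (tabs a t) (tabs b u)) Γ ->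
    NL Σ (fEq a b :: fEq t u :: Γ) Δ ->
    NL Σ (fFresh a u :: fEq t (tswap a b u) :: Γ) Δ -> NL Σ Γ Δ
| r_A3 Σ Γ Δ t ν σ a x : wfseq Σ Γ Δ -> has_type Σ t (TAbs ν σ) ->
    ~ var_in a Σ -> ~ var_in x Σ -> a <> x ->
    NL (CVar x σ :: CVar a (TName _ ν) :: Σ) (fEq t (tabs (tvar a) (tvar x)) :: Γ) Δ ->
    NL Σ Γ Δ
| r_F Σ Γ Δ a ν : wfseq Σ Γ Δ -> ~ name_in a Σ -> NL (CName a ν :: Σ) Γ Δ -> NL Σ Γ Δ
| r_ctx Σ Γ Δ a t : wfseq Σ Γ Δ -> ctx_fresh Σ (fFresh (tname a) t) ->
    NL Σ (fFresh (tname a) t :: Γ) Δ -> NL Σ Γ Δ.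

End NominalLogic.

(* Main.v *)
Require Import Defs.
From Stdlib Require Import List Arith Lia Classical ClassicalEpsilon Permutation.
Import ListNotations.
Set Implicit Arguments.


Section Values.
Variable At : Type.

Definition decA (a b : At) : {a = b} + {a <> b} := excluded_middle_informative _.

Inductive value : Type :=
| VA (c : At) | VB (i : nat) | VD | VL (v : value).

Definition swapa (c d e : At) : At :=
  if decA e c then d else if decA e d then c else e.

Fixpoint swapv (c d : At) (v : value) : value :=
  match v with
  | VA e => VA (swapa c d e)
  | VL w => VL (swapv c d w)
  | _ => v
  end.

Fixpoint atoms (v : value) : list At :=
  match v with
  | VA e => [e]
  | VL w => atoms w
  | _ => []
  end.

Fixpoint close (k : nat) (c : At) (v : value) : value :=
  match v with
  | VA e => if decA e c then VB k else VA e
  | VL w => VL (close (S k) c w)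
  | _ => v
  end.

Fixpoint openv (k : nat) (c : At) (v : value) : value :=
  match v with
  | VB i => if Nat.eqb i k then VA c else VB i
  | VL w => VL (openv (S k) c w)
  | _ => v
  end.

Fixpoint lcv (k : nat) (v : value) : Prop :=
  match v with
  | VB i => i < k
  | VL w => lcv (S k) w
  | _ => True
  end.

Ltac dA := repeat match goal with
  | |- context [decA ?a ?b] => destruct (decA a b); subst
  | H : context [decA ?a ?b] |- _ => destruct (decA a b); subst
  end; try congruence.

Lemma swapa_id c e : swapa c c e = e.
Proof. unfold swapa; dA. Qed.

Lemma swapa_invol c d e : swapa c d (swapa c d e) = e.
Proof. unfold swapa; dA. Qed.

Lemma swapa_inj c d e f : swapa c d e = swapa c d f -> e = f.
Proof. intro H. rewrite <- (swapa_invol c d e), <- (swapa_invol c d f), H. auto. Qed.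

Lemma swapa_equiv c d e f g :
  swapa c d (swapa e f g) = swapa (swapa c d e) (swapa c d f) (swapa c d g).
Proof. unfold swapa; dA. Qed.

Lemma swapv_id c v : swapv c c v = v.
Proof. induction v; simpl; f_equal; auto using swapa_id. Qed.

Lemma swapv_invol c d v : swapv c d (swapv c d v) = v.
Proof. induction v; simpl; f_equal; auto using swapa_invol. Qed.

Lemma swapv_equiv c d e f v :
  swapv c d (swapv e f v) = swapv (swapa c d e) (swapa c d f) (swapv c d v).
Proof. induction v; simpl; f_equal; auto using swapa_equiv. Qed.

Lemma swapv_fresh c d v : ~ In c (atoms v) -> ~ In d (atoms v) -> swapv c d v = v.
Proof.
  induction v; simpl; intros; f_equal; auto.
  unfold swapa; dA; intuition.
Qed.

Lemma atoms_swapv c d v : atoms (swapv c d v) = map (swapa c d) (atoms v).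
Proof. induction v; simpl; auto. Qed.

Lemma swapv_close c d k e v :
  swapv c d (close k e v) = close k (swapa c d e) (swapv c d v).
Proof.
  revert k; induction v; intro k; simpl; try rewrite IHv; auto.
  dA; simpl; dA.
  - exfalso. apply n. apply swapa_inj in e0. auto.
Qed.

Lemma close_swap_fresh a b k y :
  ~ In a (atoms y) -> close k a (swapv a b y) = close k b y.
Proof.
  revert k; induction y; intros k H; simpl in *; try rewrite IHy; auto.
  unfold swapa; dA; intuition.
Qed.

Lemma close_inj a b k t u :
  lcv k t -> lcv k u -> close k a t = close k b u ->
  t = swapv a b u /\ (a = b \/ ~ In a (atoms u)).
Proof.
  revert k u; induction t; intros k u Ht Hu E; destruct u; simpl in *;
    repeat match goal with
    | H : context [decA ?a ?b] |- _ => destruct (decA a b); subst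
    end; try discriminate; try (inversion E; subst; lia).
  - destruct (decA a b); subst; [rewrite swapa_id; auto|].
    unfold swapa; dA; intuition.
  - inversion E; subst. unfold swapa; dA; intuition.
  - inversion E; subst. destruct (decA a b); auto.
  - destruct (decA a b); auto.
  - inversion E. destruct (IHt _ _ Ht Hu H0) as [H1 H2]. subst. auto.
Qed.

Lemma close_open c k b : ~ In c (atoms b) -> close k c (openv k c b) = b.
Proof.
  revert k; induction b; intros k H; simpl in *; try rewrite IHb; auto.
  - dA; intuition.
  - destruct (Nat.eqb_spec i k); simpl; subst; dA.
Qed.

Lemma atoms_close k c v x : In x (atoms (close k c v)) -> In x (atoms v).
Proof. revert k; induction v; intros k; simpl; dA; eauto. Qed.

End Values.
Arguments VB {At}. Arguments VD {At}. Arguments VA {At}. Arguments VL {At}.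

Unset Implicit Arguments.

Ltac dA2 := repeat match goal with
  | |- context [@decA ?T ?a ?b] => destruct (@decA T a b); subst
  | H : context [@decA ?T ?a ?b] |- _ => destruct (@decA T a b); subst
  end; try congruence.

Section Sem.
Variable sg : signature.

Definition atom := (nty sg * nat)%type.
Definition val := value atom.
Notation sty := (Defs.sty sg).

Fixpoint vtyb (E : list (nty sg)) (v : val) (τ : sty) : Prop :=
  match v, τ with
  | VA c, TName _ ν => fst c = ν
  | VB i, TName _ ν => nth_error E i = Some ν
  | VD, TData _ _ => True
  | VL w, TAbs ν τ' => vtyb (ν :: E) w τ'
  | _, _ => False
  end.

Lemma vtyb_lc E v τ : vtyb E v τ -> lcv (length E) v.
Proof.
  revert E τ; induction v; intros E τ H; destruct τ; simpl in *; try tauto.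
  - apply nth_error_Some. congruence.
  - apply (IHv _ _ H).
Qed.

Lemma vtyb_close E v τ c ν : vtyb E v τ -> fst c = ν ->
  vtyb (E ++ [ν]) (close (length E) c v) τ.
Proof.
  revert E τ; induction v; intros E τ H Hc; destruct τ; simpl in *; try tauto.
  - dA2; simpl; auto.
    rewrite nth_error_app2, Nat.sub_diag; simpl; auto.
  - rewrite nth_error_app1; auto. apply nth_error_Some. congruence.
  - apply (IHv (n :: E) τ H Hc).
Qed.

Lemma vtyb_open E b τ c ν : vtyb (E ++ [ν]) b τ -> fst c = ν ->
  vtyb E (openv (length E) c b) τ.
Proof.
  revert E τ; induction b; intros E τ H Hc; destruct τ; simpl in *; try tauto.
  - destruct (Nat.eqb_spec i (length E)); simpl.
    + subst. rewrite nth_error_app2, Nat.sub_diag in H by lia; simpl in *; congruence.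
    + assert (i < length E).
      { assert (i < length (E ++ [ν])) by (apply nth_error_Some; congruence).
        rewrite length_app in H0; simpl in H0; lia. }
      rewrite nth_error_app1 in H; auto.
  - apply (IHb (n :: E) τ H Hc).
Qed.

Lemma vtyb_swap E v τ c d : fst c = fst d -> vtyb E v τ -> vtyb E (swapv c d v) τ.
Proof.
  revert E τ; induction v; intros E τ Hcd H; destruct τ; simpl in *; try tauto.
  - unfold swapa; dA2.
  - apply IHv; auto.
Qed.

Fixpoint eval (ρ η : nat -> val) (ev en : list val) (t : term sg) : val :=
  match t with
  | tvar _ x => ρ x
  | tbvar _ i => nth i ev (VD)
  | tname _ a => η a
  | tbname _ i => nth i en (VD)
  | tswap a b u =>
      match eval ρ η ev en a, eval ρ η ev en b with
      | VA c, VA d => swapv c d (eval ρ η ev en u)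
      | _, _ => eval ρ η ev en u
      end
  | tabs a u =>
      match eval ρ η ev en a with
      | VA c => VL (close 0 c (eval ρ η ev en u))
      | _ => VD
      end
  | _ => VD
  end.

Fixpoint tfv (t : term sg) : list nat :=
  match t with
  | tvar _ x => [x]
  | tswap a b u => tfv a ++ tfv b ++ tfv u
  | tabs a u => tfv a ++ tfv u
  | _ => []
  end.

Fixpoint tfn (t : term sg) : list nat :=
  match t with
  | tname _ x => [x]
  | tswap a b u => tfn a ++ tfn b ++ tfn u
  | tabs a u => tfn a ++ tfn u
  | _ => []
  end.

Lemma eval_ext ρ ρ' η η' ev en t :
  (forall x, In x (tfv t) -> ρ x = ρ' x) -> (forall a, In a (tfn t) -> η a = η' a) ->
  eval ρ η ev en t = eval ρ' η' ev en t.
Proof.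
  induction t; simpl; intros H1 H2; auto.
  - rewrite IHt1, IHt2, IHt3; auto; intros; (apply H1 || apply H2); rewrite !in_app_iff; tauto.
  - rewrite IHt1, IHt2; auto; intros; (apply H1 || apply H2); rewrite !in_app_iff; tauto.
Qed.

Lemma eval_open_var ρ η ev en k s w t :
  (forall ev en, eval ρ η ev en s = w) -> length ev = k ->
  eval ρ η ev en (topen_var k s t) = eval ρ η (ev ++ [w]) en t.
Proof.
  intros Hs Hk; induction t; simpl; auto.
  - destruct (Nat.eqb_spec i k).
    + subst. rewrite Hs, app_nth2, Nat.sub_diag; auto.
    + destruct (Nat.lt_ge_cases i k).
      * simpl. rewrite app_nth1; auto; lia.
      * simpl. rewrite !nth_overflow; auto; rewrite ?length_app; simpl; lia.
  - rewrite IHt1, IHt2, IHt3; auto.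
  - rewrite IHt1, IHt2; auto.
Qed.

Lemma eval_open_name ρ η ev en k c t :
  length en = k ->
  eval ρ η ev en (topen_name k c t) = eval ρ η ev (en ++ [η c]) t.
Proof.
  intros Hk; induction t; simpl; auto.
  - destruct (Nat.eqb_spec i k).
    + subst. simpl. rewrite app_nth2, Nat.sub_diag; auto.
    + destruct (Nat.lt_ge_cases i k).
      * simpl. rewrite app_nth1; auto; lia.
      * simpl. rewrite !nth_overflow; auto; rewrite ?length_app; simpl; lia.
  - rewrite IHt1, IHt2, IHt3; auto.
  - rewrite IHt1, IHt2; auto.
Qed.

Lemma eval_subst ρ η ev en z s s' t :
  eval ρ η ev en s = eval ρ η ev en s' ->
  eval ρ η ev en (tsubst z s t) = eval ρ η ev en (tsubst z s' t).
Proof.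
  intros Hs; induction t; simpl; auto.
  - destruct (Nat.eqb x z); auto.
  - rewrite IHt1, IHt2, IHt3; auto.
  - rewrite IHt1, IHt2; auto.
Qed.

Lemma tfv_open_var k s t x : In x (tfv t) -> In x (tfv (topen_var k s t)).
Proof. induction t; simpl; rewrite ?in_app_iff; intuition. Qed.
Lemma tfn_open_var k s t x : In x (tfn t) -> In x (tfn (topen_var k s t)).
Proof. induction t; simpl; rewrite ?in_app_iff; intuition. Qed.
Lemma tfv_open_name k c t x : In x (tfv t) -> In x (tfv (topen_name k c t)).
Proof. induction t; simpl; rewrite ?in_app_iff; intuition. Qed.
Lemma tfn_open_name k c t x : In x (tfn t) -> In x (tfn (topen_name k c t)).
Proof. induction t; simpl; rewrite ?in_app_iff; intuition. Qed.

Fixpoint catoms (ρ η : nat -> val) (Σ : ctx sg) : list atom :=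
  match Σ with
  | [] => []
  | CVar x _ :: Rs => atoms (ρ x) ++ catoms ρ η Rs
  | CName _ a _ :: Rs => atoms (η a) ++ catoms ρ η Rs
  end.

Fixpoint cvalid (ρ η : nat -> val) (Σ : ctx sg) : Prop :=
  match Σ with
  | [] => True
  | CVar x τ :: Rs => vtyb [] (ρ x) τ /\ cvalid ρ η Rs
  | CName _ a ν :: Rs => (exists n, η a = VA (ν, n) /\ ~ In (ν, n) (catoms ρ η Rs)) /\ cvalid ρ η Rs
  end.

Lemma catoms_var ρ η Σ x τ : In (CVar x τ) Σ -> incl (atoms (ρ x)) (catoms ρ η Σ).
Proof.
  induction Σ as [|[y σ|b ν] Rs IH]; simpl; intros H y0 Hy; [tauto| |];
    rewrite in_app_iff; destruct H as [H|H]; try discriminate;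
    first [ (inversion H; subst; auto; fail) | right; eapply IH; eauto ].
Qed.

Lemma catoms_name ρ η Σ a ν : In (CName _ a ν) Σ -> incl (atoms (η a)) (catoms ρ η Σ).
Proof.
  induction Σ as [|[y σ|b ν'] Rs IH]; simpl; intros H y0 Hy; [tauto| |];
    rewrite in_app_iff; destruct H as [H|H]; try discriminate;
    first [ (inversion H; subst; auto; fail) | right; eapply IH; eauto ].
Qed.

Lemma cvalid_var ρ η Σ x τ : cvalid ρ η Σ -> In (CVar x τ) Σ -> vtyb [] (ρ x) τ.
Proof.
  induction Σ as [|[y σ|b ν] Rs IH]; simpl; intros Hv H; [tauto| |];
    destruct H as [H|H]; try discriminate;
    first [ (inversion H; subst; tauto) | apply IH; tauto ].
Qed.

Lemma cvalid_name ρ η Σ a ν : cvalid ρ η Σ -> In (CName _ a ν) Σ -> exists n, η a = VA (ν, n).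
Proof.
  induction Σ as [|[y σ|b ν'] Rs IH]; simpl; intros Hv H; [tauto| |];
    destruct H as [H|H]; try discriminate;
    first [ (inversion H; subst; destruct Hv as [[n [Hn _]] _]; eauto; fail) | apply IH; tauto ].
Qed.

Lemma cvalid_ext ρ ρ' η η' Σ :
  (forall x, var_in x Σ -> ρ x = ρ' x) -> (forall a, name_in a Σ -> η a = η' a) ->
  catoms ρ η Σ = catoms ρ' η' Σ /\ (cvalid ρ η Σ -> cvalid ρ' η' Σ).
Proof.
  induction Σ as [|e Rs IH]; simpl; intros H1 H2; [tauto|].
  assert (Hr1 : forall z, var_in z Rs -> ρ z = ρ' z)
    by (intros z [t Hz]; apply H1; exists t; simpl; auto).
  assert (Hr2 : forall z, name_in z Rs -> η z = η' z)
    by (intros z [t Hz]; apply H2; exists t; simpl; auto).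
  destruct (IH Hr1 Hr2) as [IH1 IH2].
  destruct e as [y σ|b ν].
  - assert (E : ρ y = ρ' y) by (apply H1; exists σ; simpl; auto).
    rewrite IH1, E. split; [reflexivity|]. intros [? ?]; split; auto.
  - assert (E : η b = η' b) by (apply H2; exists ν; simpl; auto).
    rewrite IH1, E. split; [reflexivity|]. intros [[n [Hn Hn']] ?]; split; auto.
    exists n. rewrite <- IH1 in *. auto.
Qed.

Lemma has_type_closed Σ t τ : has_type Σ t τ ->
  forall ρ η ev en, eval ρ η ev en t = eval ρ η [] [] t.
Proof.
  induction 1; intros; simpl; auto.
  - rewrite IHhas_type1, IHhas_type2, IHhas_type3; auto.
  - rewrite IHhas_type1, IHhas_type2; auto.
Qed.

Lemma has_type_val ρ η Σ t τ : cvalid ρ η Σ -> has_type Σ t τ ->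
  vtyb [] (eval ρ η [] [] t) τ /\ incl (atoms (eval ρ η [] [] t)) (catoms ρ η Σ).
Proof.
  intros Hv; induction 1; simpl.
  - split; [eapply cvalid_var; eauto | eapply catoms_var; eauto].
  - destruct (cvalid_name _ _ _ _ _ Hv H) as [n Hn]. rewrite Hn. split; [reflexivity|].
    rewrite <- Hn. eapply catoms_name; eauto.
  - split; simpl; auto. intros ? [].
  - split; simpl; auto. intros ? [].
  - destruct IHhas_type1 as [A1 B1], IHhas_type2 as [A2 B2], IHhas_type3 as [A3 B3].
    destruct (eval ρ η [] [] a); simpl in A1; try tauto; try discriminate; try match goal with H : nth_error [] ?i = _ |- _ => destruct i; discriminate end.
    destruct (eval ρ η [] [] b); simpl in A2; try tauto; try discriminate; try match goal with H : nth_error [] ?i = _ |- _ => destruct i; discriminate end.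
    split. apply vtyb_swap; congruence.
    rewrite atoms_swapv. intros y Hy. apply in_map_iff in Hy as [z [Hz Hz']]. subst.
    unfold swapa.
    match goal with |- context [@decA ?T ?a ?b] => destruct (@decA T a b) end;
      [apply B2; simpl; auto|].
    match goal with |- context [@decA ?T ?a ?b] => destruct (@decA T a b) end;
      [apply B1; simpl; auto|]. apply B3; auto.
  - destruct IHhas_type1 as [A1 B1], IHhas_type2 as [A2 B2].
    destruct (eval ρ η [] [] a); simpl in A1; try tauto; try discriminate; try match goal with H : nth_error [] ?i = _ |- _ => destruct i; discriminate end.
    split. simpl. apply (vtyb_close [] _ _ _ _ A2 A1).
    intros y Hy. apply B2. eapply atoms_close; eauto.
Qed.

Lemma has_type_fv Σ t τ : has_type Σ t τ ->
  (forall x, In x (tfv t) -> var_in x Σ) /\ (forall a, In a (tfn t) -> name_in a Σ).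
Proof.
  induction 1; simpl; split; intros y Hy; rewrite ?in_app_iff in Hy; try tauto;
    try (destruct Hy as [<-|[]]; eexists; eauto); firstorder.
Qed.


Fixpoint sem (ρ η : nat -> val) (ev en : list val) (A : form sg) : Prop :=
  match A with
  | fTop _ => True
  | fBot _ => False
  | fPred _ _ => True
  | fEq t u => eval ρ η ev en t = eval ρ η ev en u
  | fFresh a t => exists c, eval ρ η ev en a = VA c /\ ~ In c (atoms (eval ρ η ev en t))
  | fAnd B C => sem ρ η ev en B /\ sem ρ η ev en C
  | fOr B C => sem ρ η ev en B \/ sem ρ η ev en C
  | fImp B C => sem ρ η ev en B -> sem ρ η ev en C
  | fAll σ B => forall v, vtyb [] v σ -> sem ρ η (v :: ev) en B
  | fEx σ B => exists v, vtyb [] v σ /\ sem ρ η (v :: ev) en B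
  | fNew ν B => exists L, forall n, ~ In (ν, n) L -> sem ρ η ev (VA (ν, n) :: en) B
  end.

Fixpoint fvF (A : form sg) : list nat :=
  match A with
  | fEq t u => tfv t ++ tfv u
  | fFresh a t => tfv a ++ tfv t
  | fAnd B C | fOr B C | fImp B C => fvF B ++ fvF C
  | fAll _ B | fEx _ B | fNew _ B => fvF B
  | _ => []
  end.

Fixpoint fnF (A : form sg) : list nat :=
  match A with
  | fEq t u => tfn t ++ tfn u
  | fFresh a t => tfn a ++ tfn t
  | fAnd B C | fOr B C | fImp B C => fnF B ++ fnF C
  | fAll _ B | fEx _ B | fNew _ B => fnF B
  | _ => []
  end.

Lemma sem_ext ρ ρ' η η' A : forall ev en,
  (forall x, In x (fvF A) -> ρ x = ρ' x) -> (forall a, In a (fnF A) -> η a = η' a) ->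
  (sem ρ η ev en A <-> sem ρ' η' ev en A).
Proof.
  induction A; intros ev en H1 H2; simpl in *; try tauto.
  - rewrite (eval_ext ρ ρ' η η' ev en t), (eval_ext ρ ρ' η η' ev en u); try tauto;
      intros; (apply H1 || apply H2); rewrite in_app_iff; tauto.
  - rewrite (eval_ext ρ ρ' η η' ev en a), (eval_ext ρ ρ' η η' ev en t); try tauto;
      intros; (apply H1 || apply H2); rewrite in_app_iff; tauto.
  - rewrite (IHA1 ev en), (IHA2 ev en); try tauto;
      intros; (apply H1 || apply H2); rewrite in_app_iff; tauto.
  - rewrite (IHA1 ev en), (IHA2 ev en); try tauto;
      intros; (apply H1 || apply H2); rewrite in_app_iff; tauto.
  - rewrite (IHA1 ev en), (IHA2 ev en); try tauto;
      intros; (apply H1 || apply H2); rewrite in_app_iff; tauto.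
  - split; intros H v Hv; apply (IHA (v :: ev) en H1 H2); auto.
  - split; intros [v [Hv H]]; exists v; split; auto; apply (IHA (v :: ev) en H1 H2); auto.
  - split; intros [L H]; exists L; intros m Hm; apply (IHA ev _ H1 H2); auto.
Qed.

Lemma sem_open_var ρ η s w A : forall ev en k,
  (forall ev en, eval ρ η ev en s = w) -> length ev = k ->
  (sem ρ η ev en (fopen_var k s A) <-> sem ρ η (ev ++ [w]) en A).
Proof.
  induction A; intros ev en k Hs Hk; simpl in *; try tauto.
  - rewrite !(eval_open_var ρ η ev en k s w); tauto.
  - rewrite !(eval_open_var ρ η ev en k s w); tauto.
  - rewrite (IHA1 ev en k), (IHA2 ev en k); tauto.
  - rewrite (IHA1 ev en k), (IHA2 ev en k); tauto.
  - rewrite (IHA1 ev en k), (IHA2 ev en k); tauto.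
  - split; intros H v Hv; apply (IHA (v :: ev) en (S k)); simpl; auto.
  - split; intros [v [Hv H]]; exists v; split; auto; apply (IHA (v :: ev) en (S k)); simpl; auto.
  - split; intros [L H]; exists L; intros m Hm; apply (IHA ev _ k); auto.
Qed.

Lemma sem_open_name ρ η c A : forall ev en k, length en = k ->
  (sem ρ η ev en (fopen_name k c A) <-> sem ρ η ev (en ++ [η c]) A).
Proof.
  induction A; intros ev en k Hk; simpl in *; try tauto.
  - rewrite !(eval_open_name ρ η ev en k c); tauto.
  - rewrite !(eval_open_name ρ η ev en k c); tauto.
  - rewrite (IHA1 ev en k), (IHA2 ev en k); tauto.
  - rewrite (IHA1 ev en k), (IHA2 ev en k); tauto.
  - rewrite (IHA1 ev en k), (IHA2 ev en k); tauto.
  - split; intros H v Hv; apply (IHA (v :: ev) en k); simpl; auto.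
  - split; intros [v [Hv H]]; exists v; split; auto; apply (IHA (v :: ev) en k); simpl; auto.
  - split; intros [L H]; exists L; intros m Hm; apply (IHA ev (VA (n, m) :: en) (S k)); simpl; auto.
Qed.

Lemma fv_open_var k s A x : In x (fvF A) -> In x (fvF (fopen_var k s A)).
Proof.
  revert k; induction A; intro k; simpl; rewrite ?in_app_iff; auto;
    intuition auto using tfv_open_var.
Qed.
Lemma fn_open_var k s A x : In x (fnF A) -> In x (fnF (fopen_var k s A)).
Proof.
  revert k; induction A; intro k; simpl; rewrite ?in_app_iff; auto;
    intuition auto using tfn_open_var.
Qed.
Lemma fv_open_name k c A x : In x (fvF A) -> In x (fvF (fopen_name k c A)).
Proof.
  revert k; induction A; intro k; simpl; rewrite ?in_app_iff; auto;
    intuition auto using tfv_open_name.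
Qed.
Lemma fn_open_name k c A x : In x (fnF A) -> In x (fnF (fopen_name k c A)).
Proof.
  revert k; induction A; intro k; simpl; rewrite ?in_app_iff; auto;
    intuition auto using tfn_open_name.
Qed.

Definition ctxvars (Σ : ctx sg) : list nat :=
  flat_map (fun e => match e with CVar x _ => [x] | _ => [] end) Σ.
Definition ctxnames (Σ : ctx sg) : list nat :=
  flat_map (fun e => match e with CName _ x _ => [x] | _ => [] end) Σ.

Lemma var_in_vars x Σ : var_in x Σ -> In x (ctxvars Σ).
Proof.
  intros [τ H]. unfold ctxvars. apply in_flat_map. exists (CVar x τ). simpl; auto.
Qed.
Lemma name_in_names x Σ : name_in x Σ -> In x (ctxnames Σ).
Proof.
  intros [τ H]. unfold ctxnames. apply in_flat_map. exists (CName _ x τ). simpl; auto.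
Qed.

Lemma fresh_nat (l : list nat) : exists z, ~ In z l.
Proof.
  exists (S (list_max l)). intro H.
  assert (S (list_max l) <= list_max l).
  { assert (HF : Forall (fun k => k <= list_max l) l) by (apply list_max_le; auto).
    rewrite Forall_forall in HF. apply HF; auto. }
  lia.
Qed.

Lemma fresh_atom (ν : nty sg) (L : list atom) : exists n, ~ In (ν, n) L.
Proof.
  destruct (fresh_nat (map snd L)) as [n Hn]. exists n. intro H. apply Hn.
  apply in_map_iff. exists (ν, n); auto.
Qed.

Lemma wff_fv Σ A : wff Σ A ->
  (forall x, In x (fvF A) -> var_in x Σ) /\ (forall a, In a (fnF A) -> name_in a Σ).
Proof.
  induction 1; simpl; try (split; intros ? []).
  - destruct (has_type_fv _ _ _ H) as [H1 H2], (has_type_fv _ _ _ H0) as [H3 H4].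
    split; intros y Hy; rewrite in_app_iff in Hy; intuition.
  - destruct (has_type_fv _ _ _ H) as [H1 H2], (has_type_fv _ _ _ H0) as [H3 H4].
    split; intros y Hy; rewrite in_app_iff in Hy; intuition.
  - split; intros y Hy; rewrite in_app_iff in Hy; intuition.
  - split; intros y Hy; rewrite in_app_iff in Hy; intuition.
  - split; intros y Hy; rewrite in_app_iff in Hy; intuition.
  - split; intros y Hy.
    + destruct (fresh_nat (y :: ctxvars Σ)) as [z Hz].
      assert (Hz' : ~ var_in z Σ) by (intro Hc; apply Hz; right; apply var_in_vars; auto).
      destruct (H0 z Hz') as [H1 _].
      destruct (H1 y (fv_open_var _ _ _ _ Hy)) as [τ [Ht|Ht]].
      * inversion Ht; subst. exfalso; apply Hz; left; auto.
      * exists τ; auto.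
    + destruct (fresh_nat (ctxvars Σ)) as [z Hz].
      assert (Hz' : ~ var_in z Σ) by (intro Hc; apply Hz; apply var_in_vars; auto).
      destruct (H0 z Hz') as [_ H1].
      destruct (H1 y (fn_open_var _ _ _ _ Hy)) as [τ [Ht|Ht]].
      * discriminate.
      * exists τ; auto.
  - split; intros y Hy.
    + destruct (fresh_nat (y :: ctxvars Σ)) as [z Hz].
      assert (Hz' : ~ var_in z Σ) by (intro Hc; apply Hz; right; apply var_in_vars; auto).
      destruct (H0 z Hz') as [H1 _].
      destruct (H1 y (fv_open_var _ _ _ _ Hy)) as [τ [Ht|Ht]].
      * inversion Ht; subst. exfalso; apply Hz; left; auto.
      * exists τ; auto.
    + destruct (fresh_nat (ctxvars Σ)) as [z Hz].
      assert (Hz' : ~ var_in z Σ) by (intro Hc; apply Hz; apply var_in_vars; auto).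
      destruct (H0 z Hz') as [_ H1].
      destruct (H1 y (fn_open_var _ _ _ _ Hy)) as [τ [Ht|Ht]].
      * discriminate.
      * exists τ; auto.
  - split; intros y Hy.
    + destruct (fresh_nat (ctxnames Σ)) as [z Hz].
      assert (Hz' : ~ name_in z Σ) by (intro Hc; apply Hz; apply name_in_names; auto).
      destruct (H0 z Hz') as [H1 _].
      destruct (H1 y (fv_open_name _ _ _ _ Hy)) as [τ [Ht|Ht]].
      * discriminate.
      * exists τ; auto.
    + destruct (fresh_nat (y :: ctxnames Σ)) as [z Hz].
      assert (Hz' : ~ name_in z Σ) by (intro Hc; apply Hz; right; apply name_in_names; auto).
      destruct (H0 z Hz') as [_ H1].
      destruct (H1 y (fn_open_name _ _ _ _ Hy)) as [τ [Ht|Ht]].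
      * inversion Ht; subst. exfalso; apply Hz; left; auto.
      * exists τ; auto.
Qed.


Definition upd (f : nat -> val) x v := fun y => if Nat.eqb y x then v else f y.

Lemma upd_eq f x v : upd f x v x = v.
Proof. unfold upd; rewrite Nat.eqb_refl; auto. Qed.
Lemma upd_neq f x v y : y <> x -> upd f x v y = f y.
Proof. unfold upd; intro H; destruct (Nat.eqb_spec y x); congruence. Qed.

Lemma weak_var ρ η Σ x v A ev en : ~ var_in x Σ -> wff Σ A ->
  (sem (upd ρ x v) η ev en A <-> sem ρ η ev en A).
Proof.
  intros Hx HA. destruct (wff_fv _ _ HA) as [H1 _].
  apply sem_ext; auto. intros y Hy. apply upd_neq. intro; subst; auto.
Qed.

Lemma weak_name ρ η Σ x v A ev en : ~ name_in x Σ -> wff Σ A ->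
  (sem ρ (upd η x v) ev en A <-> sem ρ η ev en A).
Proof.
  intros Hx HA. destruct (wff_fv _ _ HA) as [_ H1].
  apply sem_ext; auto. intros y Hy. apply upd_neq. intro; subst; auto.
Qed.

Lemma cvalid_upd_var ρ η Σ x v : ~ var_in x Σ ->
  catoms (upd ρ x v) η Σ = catoms ρ η Σ /\ (cvalid ρ η Σ -> cvalid (upd ρ x v) η Σ).
Proof.
  intros Hx. destruct (cvalid_ext ρ (upd ρ x v) η η Σ) as [E1 E2]; auto.
  intros y Hy. rewrite upd_neq; auto. intro; subst; auto.
Qed.

Lemma cvalid_upd_name ρ η Σ x v : ~ name_in x Σ ->
  catoms ρ (upd η x v) Σ = catoms ρ η Σ /\ (cvalid ρ η Σ -> cvalid ρ (upd η x v) Σ).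
Proof.
  intros Hx. destruct (cvalid_ext ρ ρ η (upd η x v) Σ) as [E1 E2]; auto.
  intros y Hy. rewrite upd_neq; auto. intro; subst; auto.
Qed.

Lemma vtyb_name v ν : vtyb [] v (TName _ ν) -> exists c, v = VA c /\ fst c = ν.
Proof.
  destruct v; simpl; intros H; try tauto; eauto.
  destruct i; discriminate.
Qed.

Definition valid (Σ : ctx sg) (Γ Δ : list (form sg)) :=
  forall ρ η, cvalid ρ η Σ -> (forall A, In A Γ -> sem ρ η [] [] A) ->
  exists B, In B Δ /\ sem ρ η [] [] B.

Lemma NL_wf (Σ : ctx sg) Γ Δ : NL Σ Γ Δ -> wfseq Σ Γ Δ.
Proof. destruct 1; assumption. Qed.

Lemma perm_head {T} (l l' : list T) x : Permutation l (x :: l') -> In x l.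
Proof. intro H. apply Permutation_in with (x :: l'); [symmetry; auto| left; auto]. Qed.
Lemma perm_tail {T} (l l' : list T) x y : Permutation l (x :: l') -> In y l' -> In y l.
Proof. intros H Hy. apply Permutation_in with (x :: l'); [symmetry; auto| right; auto]. Qed.
Lemma perm_inv {T} (l l' : list T) x y : Permutation l (x :: l') -> In y l -> y = x \/ In y l'.
Proof. intros H Hy. apply (Permutation_in _ H) in Hy. destruct Hy; auto. Qed.

Lemma wf_in_G (Σ : ctx sg) Γ Δ A : wfseq Σ Γ Δ -> In A Γ -> wff Σ A.
Proof. intros [_ [H _]] HA. rewrite Forall_forall in H; auto. Qed.
Lemma wf_in_D (Σ : ctx sg) Γ Δ A : wfseq Σ Γ Δ -> In A Δ -> wff Σ A.
Proof. intros [_ [_ H]] HA. rewrite Forall_forall in H; auto. Qed.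

Lemma ctx_fresh_sem ρ η Σ a t : cvalid ρ η Σ -> ctx_fresh Σ (fFresh (tname _ a) t) ->
  sem ρ η [] [] (fFresh (tname _ a) t).
Proof.
  induction Σ as [|[y σ|b ν] Rs IH]; simpl; intros Hv H; try tauto.
  destruct H as [H|[t' [τ [Ht E]]]]; [tauto|].
  injection E as E1 E2; subst.
  destruct Hv as [[n [Hn Hn']] Hv]. exists (ν, n). split; auto.
  intro Hin. apply Hn'. apply (proj2 (has_type_val _ _ _ _ _ Hv Ht)); auto.
Qed.

Lemma has_type_name ρ η Σ t ν : cvalid ρ η Σ -> has_type Σ t (TName _ ν) ->
  exists c, eval ρ η [] [] t = VA c /\ fst c = ν.
Proof. intros Hv Ht. apply vtyb_name. apply (has_type_val _ _ _ _ _ Hv Ht). Qed.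


Lemma swapa_l (c d : atom) : swapa c d c = d.
Proof. unfold swapa; dA2. Qed.

Lemma ax_sound ρ η Σ Ps Qs : cvalid ρ η Σ -> ax_inst Σ Ps Qs ->
  (forall P, In P Ps -> sem ρ η [] [] P) -> (forall Q, In Q Qs -> wff Σ Q) ->
  exists Q, In Q Qs /\ sem ρ η [] [] Q.
Proof.
  intros Hv Hax HP HQ.
  destruct Hax; simpl in *.
  - eexists; split; [left; reflexivity|]. simpl.
    destruct (eval ρ η [] [] a); auto. apply swapv_id.
  - eexists; split; [left; reflexivity|]. simpl.
    destruct (eval ρ η [] [] a), (eval ρ η [] [] b); auto. apply swapv_invol.
  - eexists; split; [left; reflexivity|]. simpl.
    assert (W := HQ _ (or_introl eq_refl)). inversion W; subst.
    inversion H1; subst.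
    destruct (has_type_name _ _ _ _ _ Hv H4) as [c [Ec _]].
    destruct (has_type_name _ _ _ _ _ Hv H6) as [d [Ed _]].
    rewrite Ec, Ed. simpl. rewrite swapa_l. auto.
  - eexists; split; [left; reflexivity|]. simpl.
    destruct (eval ρ η [] [] a), (eval ρ η [] [] b); auto.
  - eexists; split; [left; reflexivity|]. simpl.
    destruct (eval ρ η [] [] a), (eval ρ η [] [] b); auto.
  - eexists; split; [left; reflexivity|]. simpl.
    destruct (eval ρ η [] [] a), (eval ρ η [] [] b); simpl; auto;
      destruct (eval ρ η [] [] c), (eval ρ η [] [] d); simpl; auto; apply swapv_equiv.
  - eexists; split; [left; reflexivity|]. simpl.
    destruct (eval ρ η [] [] a), (eval ρ η [] [] b); simpl; auto;
      destruct (eval ρ η [] [] c); simpl; auto. rewrite swapv_close. auto.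
  - eexists; split; [left; reflexivity|]. simpl. auto.
  - eexists; split; [left; reflexivity|]. simpl.
    assert (E := HP _ (or_introl eq_refl)). simpl in E. rewrite E. auto.
  - eexists; split; [left; reflexivity|]. simpl.
    destruct (HP _ (or_introl eq_refl)) as [C [EC HC]].
    destruct (eval ρ η [] [] a) eqn:Ea, (eval ρ η [] [] b) eqn:Eb; simpl; eauto.
    rewrite EC. simpl. eexists; split; [reflexivity|].
    rewrite atoms_swapv. intro Hin. apply in_map_iff in Hin as [z [Hz Hz']].
    apply swapa_inj in Hz. subst; auto.
  - eexists; split; [left; reflexivity|]. simpl.
    destruct (HP _ (or_introl eq_refl)) as [A [EA HA]].
    destruct (HP _ (or_intror (or_introl eq_refl))) as [B [EB HB]].
    rewrite EA, EB. apply swapv_fresh; auto.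
  - eexists; split; [left; reflexivity|]. simpl.
    match goal with Ha : has_type _ a _, Hb : has_type _ b _ |- _ =>
      destruct (has_type_name _ _ _ _ _ Hv Ha) as [c [Ec Hc]];
      destruct (has_type_name _ _ _ _ _ Hv Hb) as [d [Ed Hd]] end.
    exists c. rewrite Ec, Ed. split; auto. simpl. intros [E|[]]. subst. congruence.
  - exfalso. destruct (HP _ (or_introl eq_refl)) as [C [EC HC]].
    rewrite EC in HC. simpl in HC. auto.
  - assert (W1 := HQ _ (or_introl eq_refl)). assert (W2 := HQ _ (or_intror (or_introl eq_refl))).
    inversion W1; subst. inversion W2; subst.
    match goal with Ha : has_type _ a (TName _ _) |- _ =>
      destruct (has_type_name _ _ _ _ _ Hv Ha) as [c [Ec Hc]] end.
    match goal with H1 : has_type _ a ?T, H2 : has_type _ b ?T |- _ =>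
      assert (Ht := proj1 (has_type_val _ _ _ _ _ Hv H1)); rewrite Ec in Ht;
      destruct T; simpl in Ht; try tauto;
      destruct (has_type_name _ _ _ _ _ Hv H2) as [d [Ed Hd]] end.
    destruct (decA c d) as [E|E].
    + subst. exists (fEq a b). split; [right; left; auto|]. simpl. congruence.
    + exists (fFresh a b). split; [left; auto|]. simpl. exists c. rewrite Ec, Ed.
      split; auto. simpl. intros [?|[]]; congruence.
  - eexists; split; [left; reflexivity|]. simpl.
    assert (W := HQ _ (or_introl eq_refl)). inversion W; subst.
    match goal with H : has_type _ (tabs b y) _ |- _ => inversion H; subst end.
    match goal with H : has_type _ b (TName _ _) |- _ =>
      destruct (has_type_name _ _ _ _ _ Hv H) as [d [Ed _]] end.
    destruct (HP _ (or_introl eq_refl)) as [A [EA HA]].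
    assert (E2 := HP _ (or_intror (or_introl eq_refl))). simpl in E2.
    rewrite EA, Ed in *. rewrite E2. f_equal. apply close_swap_fresh; auto.
Qed.

Lemma weak_var' ρ η (Σ : ctx sg) x v A ev en : ~ var_in x Σ ->
  (forall y, In y (fvF A) -> var_in y Σ) ->
  (sem (upd ρ x v) η ev en A <-> sem ρ η ev en A).
Proof.
  intros Hx H1. apply sem_ext; auto. intros y Hy. apply upd_neq. intro; subst; auto.
Qed.

Lemma weak_name' ρ η (Σ : ctx sg) x v A ev en : ~ name_in x Σ ->
  (forall y, In y (fnF A) -> name_in y Σ) ->
  (sem ρ (upd η x v) ev en A <-> sem ρ η ev en A).
Proof.
  intros Hx H1. apply sem_ext; auto. intros y Hy. apply upd_neq. intro; subst; auto.
Qed.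


Lemma soundness (Σ : ctx sg) Γ Δ : NL Σ Γ Δ -> valid Σ Γ Δ.
Proof.
  induction 1 as
    [Σ Γ Δ P Hw Ha HG1 HD1
    |Σ Γ Δ Hw HT
    |Σ Γ Δ Hw HB
    |Σ Γ Γ' Δ A B Hw Hp Hd IH
    |Σ Γ Δ Δ' A B Hw Hp Hd1 IH1 Hd2 IH2
    |Σ Γ Γ' Δ A B Hw Hp Hd1 IH1 Hd2 IH2
    |Σ Γ Δ Δ' A B Hw Hp Hd IH
    |Σ Γ Γ' Δ A B Hw Hp Hd1 IH1 Hd2 IH2
    |Σ Γ Δ Δ' A B Hw Hp Hd IH
    |Σ Γ Δ σ A t Hw Hin Ht Hd IH
    |Σ Γ Δ Δ' σ A x Hw Hp Hx Hd IH
    |Σ Γ Γ' Δ σ A x Hw Hp Hx Hd IH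
    |Σ Γ Δ σ A t Hw Hin Ht Hd IH
    |Σ Γ Δ Δ' ν A a Hw Hp Ha Hd IH
    |Σ Γ Γ' Δ ν A a Hw Hp Ha Hd IH
    |Σ Γ Δ t Hw Hd IH
    |Σ Γ Γ' Δ t u A z Hw Ha Hp Hd IH
    |Σ Γ Γ' Δ Ps Qs Hw Hax Hp Hd IH
    |Σ Γ Δ a b t u Hw Hin Hd1 IH1 Hd2 IH2
    |Σ Γ Δ t ν σ a x Hw Ht Ha Hx Hax Hd IH
    |Σ Γ Δ a ν Hw Ha Hd IH
    |Σ Γ Δ a t Hw Hc Hd IH];
    intros ρ η Hv HG.
  - exists P; auto.
  - exists (fTop _); simpl; auto.
  - exfalso. apply (HG _ HB).
  -
    destruct (HG _ (perm_head _ _ _ Hp)) as [HA HB].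
    apply IH; auto. intros C [<-|[<-|HC]]; auto. apply HG. eapply perm_tail; eauto.
  -
    destruct (IH1 ρ η Hv HG) as [C1 [[<-|HC1] S1]];
      [|exists C1; split; auto; eapply perm_tail; eauto].
    destruct (IH2 ρ η Hv HG) as [C2 [[<-|HC2] S2]];
      [|exists C2; split; auto; eapply perm_tail; eauto].
    exists (fAnd A B); split; [eapply perm_head; eauto| simpl; auto].
  -
    destruct (HG _ (perm_head _ _ _ Hp)) as [HA|HB].
    + apply IH1; auto. intros C [<-|HC]; auto. apply HG. eapply perm_tail; eauto.
    + apply IH2; auto. intros C [<-|HC]; auto. apply HG. eapply perm_tail; eauto.
  -
    destruct (IH ρ η Hv HG) as [C [[<-|[<-|HC]] SC]].
    + exists (fOr A B); split; [eapply perm_head; eauto| simpl; auto].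
    + exists (fOr A B); split; [eapply perm_head; eauto| simpl; auto].
    + exists C; split; auto; eapply perm_tail; eauto.
  -
    assert (HG' : forall C, In C Γ' -> sem ρ η [] [] C)
      by (intros C HC; apply HG; eapply perm_tail; eauto).
    destruct (IH1 ρ η Hv HG') as [C [[<-|HC] SC]]; [|exists C; auto].
    apply IH2; auto. intros D [<-|HD]; auto.
    apply (HG _ (perm_head _ _ _ Hp)); auto.
  -
    destruct (classic (sem ρ η [] [] A)) as [HA|HA].
    + destruct (IH ρ η Hv) as [C [[<-|HC] SC]].
      * intros D [<-|HD]; auto.
      * exists (fImp A B); split; [eapply perm_head; eauto| simpl; auto].
      * exists C; split; auto; eapply perm_tail; eauto.
    + exists (fImp A B); split; [eapply perm_head; eauto| simpl; tauto].
  -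
    apply IH; auto. intros D [<-|HD]; auto.
    assert (Hs := HG _ Hin). simpl in Hs.
    apply (sem_open_var ρ η t (eval ρ η [] [] t) A [] [] 0).
    + intros; eapply has_type_closed; eauto.
    + reflexivity.
    + apply Hs. apply (has_type_val _ _ _ _ _ Hv Ht).
  -
    assert (Hfv : forall y, In y (fvF (fAll σ A)) -> var_in y Σ)
      by (apply wff_fv; eapply wf_in_D; eauto; eapply perm_head; eauto).
    destruct (classic (forall v, vtyb [] v σ -> sem ρ η [v] [] A)) as [Hall|Hn].
    + exists (fAll σ A); split; [eapply perm_head; eauto| simpl; auto].
    + apply not_all_ex_not in Hn as [v Hn]. apply imply_to_and in Hn as [Hvt Hns].
      destruct (cvalid_upd_var ρ η Σ x v Hx) as [_ Hc].
      destruct (IH (upd ρ x v) η) as [C [[<-|HC] SC]].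
      * simpl. split; [rewrite upd_eq; auto| apply Hc; auto].
      * intros C HC. apply (weak_var ρ η Σ x v C [] [] Hx); auto. eapply wf_in_G; eauto.
      * exfalso. apply Hns.
        apply (sem_open_var (upd ρ x v) η (tvar _ x) v A [] [] 0) in SC;
          [|intros; simpl; apply upd_eq|reflexivity].
        simpl in SC. apply (weak_var' ρ η Σ x v A [v] [] Hx); auto.
      * exists C; split; [eapply perm_tail; eauto|].
        apply (weak_var ρ η Σ x v C [] [] Hx); auto.
        eapply wf_in_D; eauto; eapply perm_tail; eauto.
  -
    assert (Hfv : forall y, In y (fvF (fEx σ A)) -> var_in y Σ)
      by (apply wff_fv; eapply wf_in_G; eauto; eapply perm_head; eauto).
    destruct (HG _ (perm_head _ _ _ Hp)) as [v [Hvt Hvs]].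
    destruct (cvalid_upd_var ρ η Σ x v Hx) as [_ Hc].
    destruct (IH (upd ρ x v) η) as [C [HC SC]].
    + simpl. split; [rewrite upd_eq; auto| apply Hc; auto].
    + intros C [<-|HC].
      * apply (sem_open_var (upd ρ x v) η (tvar _ x) v A [] [] 0);
          [intros; simpl; apply upd_eq|reflexivity|].
        simpl. apply (weak_var' ρ η Σ x v A [v] [] Hx); auto.
      * apply (weak_var ρ η Σ x v C [] [] Hx); auto.
        eapply wf_in_G; eauto; eapply perm_tail; eauto.
        apply HG; eapply perm_tail; eauto.
    + exists C; split; auto.
      apply (weak_var ρ η Σ x v C [] [] Hx) in SC; auto. eapply wf_in_D; eauto.
  -
    destruct (IH ρ η Hv HG) as [C [[<-|HC] SC]]; [|exists C; auto].
    exists (fEx σ A); split; auto. simpl. exists (eval ρ η [] [] t).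
    split; [apply (has_type_val _ _ _ _ _ Hv Ht)|].
    apply (sem_open_var ρ η t (eval ρ η [] [] t) A [] [] 0) in SC; auto.
    intros; eapply has_type_closed; eauto.
  -
    assert (Hfn : forall y, In y (fnF (fNew ν A)) -> name_in y Σ)
      by (apply wff_fv; eapply wf_in_D; eauto; eapply perm_head; eauto).
    destruct (classic (exists C, In C Δ' /\ sem ρ η [] [] C)) as [[C [HC SC]]|Hno].
    + exists C; split; auto. eapply perm_tail; eauto.
    + exists (fNew ν A); split; [eapply perm_head; eauto|]. simpl.
      exists (catoms ρ η Σ). intros n Hn.
      destruct (cvalid_upd_name ρ η Σ a (VA (ν, n)) Ha) as [Ec Hc].
      destruct (IH ρ (upd η a (VA (ν, n)))) as [C [[<-|HC] SC]].
      * simpl. split; [|apply Hc; auto]. exists n. rewrite upd_eq, Ec. auto.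
      * intros C HC. apply (weak_name ρ η Σ a _ C [] [] Ha); auto. eapply wf_in_G; eauto.
      * apply (sem_open_name ρ (upd η a (VA (ν, n))) a A [] [] 0) in SC; auto.
        simpl in SC. rewrite upd_eq in SC.
        apply (weak_name' ρ η Σ a (VA (ν, n)) A [] _ Ha); auto.
      * exfalso. apply Hno. exists C; split; auto.
        apply (weak_name ρ η Σ a _ C [] [] Ha) in SC; auto.
        eapply wf_in_D; eauto; eapply perm_tail; eauto.
  -
    assert (Hfn : forall y, In y (fnF (fNew ν A)) -> name_in y Σ)
      by (apply wff_fv; eapply wf_in_G; eauto; eapply perm_head; eauto).
    destruct (HG _ (perm_head _ _ _ Hp)) as [L HL].
    destruct (fresh_atom ν (L ++ catoms ρ η Σ)) as [n Hn].
    destruct (cvalid_upd_name ρ η Σ a (VA (ν, n)) Ha) as [Ec Hc].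
    destruct (IH ρ (upd η a (VA (ν, n)))) as [C [HC SC]].
    + simpl. split; [|apply Hc; auto]. exists n. rewrite upd_eq, Ec.
      split; auto. intro; apply Hn; apply in_app_iff; auto.
    + intros C [<-|HC].
      * apply (sem_open_name ρ (upd η a (VA (ν, n))) a A [] [] 0); auto.
        simpl. rewrite upd_eq.
        apply (weak_name' ρ η Σ a (VA (ν, n)) A [] _ Ha); auto.
        apply HL. intro; apply Hn; apply in_app_iff; auto.
      * apply (weak_name ρ η Σ a _ C [] [] Ha); auto.
        eapply wf_in_G; eauto; eapply perm_tail; eauto.
        apply HG; eapply perm_tail; eauto.
    + exists C; split; auto.
      apply (weak_name ρ η Σ a _ C [] [] Ha) in SC; auto. eapply wf_in_D; eauto.
  -
    apply IH; auto. intros C [<-|HC]; simpl; auto.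
  -
    assert (Etu : eval ρ η [] [] t = eval ρ η [] [] u)
      by (apply (HG (fEq t u)); eapply perm_head; eauto).
    assert (HA : sem ρ η [] [] (fsubst z t A))
      by (apply HG; eapply perm_tail; eauto; left; auto).
    apply IH; auto. intros C [<-|HC]; auto.
    destruct A; simpl in *; auto.
    + rewrite <- !(eval_subst ρ η [] [] z t u); auto.
    + rewrite <- !(eval_subst ρ η [] [] z t u); auto.
  -
    assert (HP : forall P, In P Ps -> sem ρ η [] [] P).
    { intros P HP. apply HG. apply Permutation_in with (Ps ++ Γ');
        [symmetry; auto| apply in_app_iff; auto]. }
    destruct (ax_sound ρ η Σ Ps Qs Hv Hax HP) as [Q [HQ SQ]].
    + intros Q HQ. apply (wf_in_G _ _ _ _ (NL_wf _ _ _ (Hd Q HQ))); left; auto.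
    + apply (IH Q HQ ρ η Hv). intros C [<-|HC]; auto.
  -
    assert (W := wf_in_G _ _ _ _ Hw Hin). inversion W; subst.
    match goal with H1 : has_type _ (tabs a t) _, H2 : has_type _ (tabs b u) _ |- _ =>
      inversion H1; inversion H2; subst end.
    match goal with H1 : has_type _ a (TName _ _), H2 : has_type _ b (TName _ _) |- _ =>
      destruct (has_type_name _ _ _ _ _ Hv H1) as [A [EA _]];
      destruct (has_type_name _ _ _ _ _ Hv H2) as [B [EB _]] end.
    match goal with H1 : has_type _ t _, H2 : has_type _ u _ |- _ =>
      assert (Lt := vtyb_lc _ _ _ (proj1 (has_type_val _ _ _ _ _ Hv H1)));
      assert (Lu := vtyb_lc _ _ _ (proj1 (has_type_val _ _ _ _ _ Hv H2))) end.
    assert (E := HG _ Hin). simpl in E. rewrite EA, EB in E. injection E as E.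
    destruct (close_inj _ _ _ _ _ Lt Lu E) as [ET [EAB|HAU]].
    + subst B. apply IH1; auto. intros C [<-|[<-|HC]]; auto; simpl.
      * congruence.
      * rewrite ET. apply swapv_id.
    + apply IH2; auto. intros C [<-|[<-|HC]]; auto; simpl.
      * exists A; split; auto.
      * rewrite EA, EB. auto.
  -
    destruct (has_type_val _ _ _ _ _ Hv Ht) as [Vt _].
    destruct (eval ρ η [] [] t) as [| | |b0] eqn:Et; simpl in Vt; try tauto.
    destruct (fresh_atom ν (atoms b0)) as [n Hn].
    set (v := openv 0 (ν, n) b0).
    assert (Hvt : vtyb [] v σ) by (apply (vtyb_open [] b0 σ (ν, n) ν); auto).
    set (ρ' := upd (upd ρ a (VA (ν, n))) x v).
    assert (Hsem : forall C, wff Σ C -> (sem ρ' η [] [] C <-> sem ρ η [] [] C)).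
    { intros C HC. unfold ρ'.
      rewrite (weak_var (upd ρ a (VA (ν, n))) η Σ x v C [] [] Hx HC).
      apply (weak_var ρ η Σ a _ C [] [] Ha HC). }
    destruct (IH ρ' η) as [C [HC SC]].
    + simpl. unfold ρ'. rewrite upd_eq, upd_neq, upd_eq by auto. simpl.
      split; auto. split; auto.
      destruct (cvalid_upd_var ρ η Σ a (VA (ν, n)) Ha) as [_ Hc1].
      destruct (cvalid_upd_var (upd ρ a (VA (ν, n))) η Σ x v Hx) as [_ Hc2]. auto.
    + intros C [<-|HC].
      * simpl. unfold ρ' at 2 3. rewrite upd_eq, upd_neq, upd_eq by auto.
        assert (E : eval ρ' η [] [] t = eval ρ η [] [] t).
        { destruct (has_type_fv _ _ _ Ht) as [F1 F2]. apply eval_ext; auto.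
          intros y Hy. unfold ρ'. rewrite !upd_neq; auto; intro; subst; apply F1 in Hy; auto. }
        rewrite E, Et. f_equal. unfold v. rewrite close_open; auto.
      * apply Hsem; auto. eapply wf_in_G; eauto.
    + exists C; split; auto. apply Hsem; auto. eapply wf_in_D; eauto.
  -
    destruct (fresh_atom ν (catoms ρ η Σ)) as [n Hn].
    destruct (cvalid_upd_name ρ η Σ a (VA (ν, n)) Ha) as [Ec Hc].
    destruct (IH ρ (upd η a (VA (ν, n)))) as [C [HC SC]].
    + simpl. split; [|apply Hc; auto]. exists n. rewrite upd_eq, Ec. auto.
    + intros C HC. apply (weak_name ρ η Σ a _ C [] [] Ha); auto. eapply wf_in_G; eauto.
    + exists C; split; auto.
      apply (weak_name ρ η Σ a _ C [] [] Ha) in SC; auto. eapply wf_in_D; eauto.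
  -
    apply IH; auto. intros C [<-|HC]; auto. eapply ctx_fresh_sem; eauto.
Qed.

End Sem.

Theorem mainTheorem2 (sg : signature) : ~ @NL sg [] [] [@fBot sg].
Proof.
  intro H. destruct (soundness sg _ _ _ H (fun _ => VD) (fun _ => VD)) as [B [HB SB]].
  - simpl; auto.
  - intros A [].
  - destruct HB as [<-|[]]. simpl in SB. auto.
Qed.
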